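(* Let $k$ be a field, let $p\ge 1$, and let $n_1<n_2<\cdots<n_p$ be positive integers with $\gcd(n_1,\dots,n_p)=1$. Let $S=\langle (0,n_p),(n_1,n_p-n_1),(n_2,n_p-n_2),\dots,(n_{p-1},n_p-n_{p-1}),(n_p,0)\rangle\subseteq\mathbb{N}^2$ and put $n_0=0$. Then the Hilbert–Kunz multiplicity of $k[S]$ is \[e_{\mathrm{HK}}(k[S])=1+\frac{1}{n_p}\left(\sum_{r=1}^p(n_r-1)(n_r-n_{r-1})\right).\]
   Context: $k[S]=\bigoplus_{(s_1,s_2)\in S}k\,t^{s_1}u^{s_2}\subseteq k[t,u]$ is the semigroup ring of $S$, a graded $k$-algebra of dimension $2$ with homogeneous maximal ideal $\mathfrak{m}$ generated by the monomials $t^{s_1}u^{s_2}$ for the listed generators $(s_1,s_2)$ of $S$. For a $D$-dimensional graded $k$-algebra $R$ with homogeneous maximal ideal $\mathfrak{m}=\langle x_1,\dots,x_s\rangle$, set $\mathfrak{m}^{[n]}=\langle x_1^n,\dots,x_s^n\rangle$; the Hilbert–Kunz multiplicity is $e_{\mathrm{HK}}(R)=\lim_{n\to\infty}\ell_R(R/\mathfrak{m}^{[n]})/n^{D}$ (in positive characteristic $q$, taken along $n=q^e$). *)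

(* Defs.v *)
From HB Require Import structures.
From mathcomp Require Import all_boot all_order all_algebra.
From mathcomp Require Import mpoly.
Set Implicit Arguments. Unset Strict Implicit. Unset Printing Implicit Defensive.
Import Order.TTheory GRing.Theory Num.Theory.
Local Open Scope ring_scope.

(* The data: n : nat -> nat with n 0 = 0 (the convention n_0 = 0) and
   n_1 < ... < n_p.  The generators of S are g_r = (n_r, n_p - n_r),
   r = 0..p (g_0 = (0,n_p), g_p = (n_p,0)). *)

Definition inS (n : nat -> nat) (p : nat) (a b : nat) : Prop :=
  exists c : nat -> nat,
    a = (\sum_(r < p.+1) c r * n r)%N /\ b = (\sum_(r < p.+1) c r * (n p - n r))%N.

Definition mon2 (a b : nat) : 'X_{1..2} :=
  [multinom (if i == ord0 then a else b) | i < 2].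

(* k[S] as a subset of k[t,u]: polynomials all of whose monomials lie in S *)
Definition in_kS (k : fieldType) (n : nat -> nat) (p : nat) (f : {mpoly k[2]}) : Prop :=
  forall m, m \in msupp f -> inS n p (m ord0) (m (lift ord0 ord0)).

(* the generator t^{n_r} u^{n_p - n_r} of the maximal ideal of k[S] *)
Definition genS (k : fieldType) (n : nat -> nat) (p r : nat) : {mpoly k[2]} :=
  'X_[mon2 (n r) (n p - n r)].

(* the Frobenius-type power ideal m^[q] = < x_0^q, ..., x_p^q > of k[S] *)
Definition in_frob_ideal (k : fieldType) (n : nat -> nat) (p q : nat)
    (f : {mpoly k[2]}) : Prop :=
  exists c : nat -> {mpoly k[2]},
    (forall r, in_kS n p (c r)) /\ f = \sum_(r < p.+1) c r * genS k n p r ^+ q.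

Definition indep_mod (k : fieldType) (n : nat -> nat) (p q d : nat)
    (f : 'I_d -> {mpoly k[2]}) : Prop :=
  (forall i, in_kS n p (f i)) /\
  forall a : 'I_d -> k,
    in_frob_ideal n p q (\sum_(i < d) a i *: f i) -> forall i, a i = 0.

(* dim_k (k[S] / m^[q]) = d ; since k[S]/m = k, this is the length
   l_{k[S]}(k[S]/m^[q]) *)
Definition quot_dim (k : fieldType) (n : nat -> nat) (p q d : nat) : Prop :=
  (exists f : 'I_d -> {mpoly k[2]}, indep_mod n p q f) /\
  (forall f : 'I_d.+1 -> {mpoly k[2]}, ~ indep_mod n p q f).

Definition rat_cvg (u : nat -> rat) (L : rat) : Prop :=
  forall eps : rat, 0 < eps -> exists N : nat, forall e, (N <= e)%N -> `|u e - L| < eps.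

Definition HK_limit (k : fieldType) (len : nat -> nat) (L : rat) : Prop :=
  let u := fun m : nat => (len m)%:R / (m ^ 2)%:R : rat in
  ((forall q, q \in [pchar k] -> rat_cvg (fun e => u (q ^ e)%N) L) /\
   ([pchar k] =i pred0 -> rat_cvg u L)).

(* Main.v *)
Require Import Defs.
From HB Require Import structures.
From mathcomp Require Import all_boot all_order all_algebra.
From mathcomp Require Import mpoly.
From mathcomp Require Import zify.
From mathcomp Require Import ring lra.
From Stdlib Require Import Classical ClassicalEpsilon.
Import Order.TTheory GRing.Theory Num.Theory.
Set Implicit Arguments. Unset Strict Implicit. Unset Printing Implicit Defensive.

Lemma sum_interval M lo hi :
  \sum_(0 <= a < M) ((lo <= a) && (a < hi)) = minn hi M - lo.
Proof.
elim: M => [|M IH]; first by rewrite big_geq //; lia.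
rewrite big_nat_recr //= IH.
case: (leqP lo M) => h1; case: (ltnP M hi) => h2 /=; lia.
Qed.

Lemma term_le_sum (F : nat -> nat) r m : r < m -> F r <= \sum_(0 <= x < m) F x.
Proof.
elim: m => [//|m IH]; rewrite ltnS leq_eqVlt => /orP [/eqP ->|h].
  by rewrite big_nat_recr //= leq_addl.
rewrite big_nat_recr //=; exact: leq_trans (IH h) (leq_addr _ _).
Qed.

Lemma sum_zero (F : nat -> nat) m : (forall x, x < m -> F x = 0) ->
  \sum_(0 <= x < m) F x = 0.
Proof.
move=> h; rewrite (eq_big_nat _ _ (F2 := fun _ => 0)); first by rewrite big1.
by move=> x /andP [_ hx]; apply: h.
Qed.

Lemma sum_disjoint (F : nat -> bool) m :
  (forall r s, r < s -> s < m -> F r -> F s -> False) ->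
  \sum_(0 <= x < m) F x <= 1.
Proof.
elim: m => [|m IH] h; first by rewrite big_geq.
rewrite big_nat_recr //=.
case hm: (F m).
  rewrite sum_zero // => x hx; case hx': (F x) => //.
  by case: (h x m hx (ltnSn _) hx' hm).
rewrite addn0; apply: IH => r s hrs hs; apply: h hrs (ltnW _); exact: hs.
Qed.

Lemma sum_le1_mono (F : nat -> bool) (b : bool) m :
  (forall r s, r < s -> s < m -> F r -> F s -> False) ->
  (forall x, x < m -> F x -> b) ->
  \sum_(0 <= x < m) F x <= b.
Proof.
move=> hd hb; case: b hb => hb; first exact: sum_disjoint.
rewrite sum_zero // => x hx; case hF: (F x) => //; by have := hb x hx hF.
Qed.

Definition Ssum N m T := \sum_(0 <= j < T) (m - j * N).

Lemma Ssum_step N m T : 0 < N ->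
  Ssum N m.+1 T = Ssum N m T + minn (m %/ N).+1 T.
Proof.
move=> hN; rewrite /Ssum.
rewrite (eq_big_nat _ _ (F2 := fun j => (m - j * N) + ((0 <= j) && (j < (m %/ N).+1)))); last first.
  move=> j _; rewrite leq0n /= ltnS leq_divRL //; case: (leqP (j * N) m) => /= h; lia.
by rewrite big_split /= -(subn0 (minn _ _)) -sum_interval.
Qed.

Lemma Ssum_upper N m T : 0 < N -> 2 * N * Ssum N m T <= m * m + 2 * N * m.
Proof.
move=> hN; elim: m => [|m IH].
  rewrite /Ssum sum_zero //; lia.
rewrite Ssum_step //.
have h1 := leq_divM m N.
set u := m %/ N in h1 *.
have : minn u.+1 T <= u.+1 by rewrite geq_minl.
move: (minn u.+1 T) => v hv; nia.
Qed.

Lemma Ssum_lower N m T : 0 < N -> m <= T * N -> m * m <= 2 * N * Ssum N m T.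
Proof.
move=> hN; elim: m => [|m IH] hm; first lia.
rewrite Ssum_step //.
have h1 := ltn_ceil m hN.
have h2 : m %/ N < T by rewrite ltn_divLR //; lia.
have -> : minn (m %/ N).+1 T = (m %/ N).+1 by apply/minn_idPl.
have := IH (ltnW hm).
set u := m %/ N in h1 h2 *; nia.
Qed.

Lemma sumlin N t : 2 * \sum_(0 <= d < t) (d * N + 1) + t * N = t * t * N + 2 * t.
Proof. elim: t => [|t IH]; first by rewrite big_geq. rewrite big_nat_recr //=; nia. Qed.

Lemma sum_prefix_le (F : nat -> nat) a b : a <= b ->
  \sum_(0 <= j < a) F j <= \sum_(0 <= j < b) F j.
Proof. by move=> h; rewrite (@big_cat_nat _ _ _ a 0 b) /= ?leq_addr. Qed.

Section Comb.
Variable n : nat -> nat.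
Variable p : nat.
Hypothesis hp : (1 <= p)%N.
Hypothesis hn0 : n 0%N = 0%N.
Hypothesis hinc : forall i, (i < p)%N -> (n i < n i.+1)%N.

Lemma n_mono i j : i <= j -> j <= p -> n i <= n j.
Proof.
move=> hij; elim: j hij => [|j IH]; first by rewrite leqn0 => /eqP ->.
rewrite leq_eqVlt => /orP [/eqP -> //|hij] hj.
have := hinc hj; have := IH hij (ltnW hj); lia.
Qed.

Lemma n_strict i j : i < j -> j <= p -> n i < n j.
Proof.
move=> hij hj; have h1 := hinc (leq_trans hij hj).
have := n_mono hij hj; lia.
Qed.

Lemma n_ge1 r : 0 < r -> r <= p -> 1 <= n r.
Proof. by move=> h0 hr; have := n_strict h0 hr; rewrite hn0. Qed.

Lemma n_leN r : r <= p -> n r <= n p.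
Proof. by move=> hr; apply: n_mono. Qed.

Lemma n_ltN r : r < p -> n r < n p.
Proof. by move=> hr; apply: n_strict. Qed.

Lemma N_pos : 0 < n p.
Proof. exact: n_ge1. Qed.

Lemma leq_sum_nat m k F G : (forall i, m <= i < k -> F i <= G i) ->
  \sum_(m <= i < k) F i <= \sum_(m <= i < k) G i.
Proof.
move=> h; rewrite big_nat_cond [X in _ <= X]big_nat_cond.
by apply: leq_sum => i /andP [hi _]; exact: h.
Qed.

Definition memA (d a : nat) : Prop := exists c : nat -> nat,
  \sum_(0 <= r < p.+1) c r = d /\ \sum_(0 <= r < p.+1) c r * n r = a.

Lemma memA_le d a : memA d a -> a <= d * n p.
Proof.
move=> [c [<- <-]]; rewrite big_distrl /=.
apply: leq_sum_nat => r; move=> /andP [_ hr].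
by rewrite leq_mul2l n_leN ?orbT.
Qed.

Lemma memA_low d a j : memA d a -> a <= j -> memA j a.
Proof.
move=> [c [hd ha]] haj.
move: hd ha; rewrite !big_nat_recl // hn0 muln0 add0n.
set s1 := \sum_(0 <= i < p) c i.+1; set t1 := \sum_(0 <= i < p) c i.+1 * n i.+1.
move=> hd ha.
have hst : s1 <= t1.
  rewrite /s1 /t1; apply: leq_sum_nat => i; move=> /andP [_ hi].
  by rewrite -{1}[c i.+1]muln1 leq_mul2l n_ge1 ?orbT.
exists (fun r => if r is 0 then j - s1 else c r); split.
  by rewrite big_nat_recl //= -/s1; lia.
by rewrite big_nat_recl //= hn0 muln0 add0n -/t1.
Qed.

Lemma memA_high d a j q : memA d a -> d = q + j -> d * n p - a <= j ->
  memA j (a - q * n p).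
Proof.
move=> [c [hd ha]] hdq hj.
move: hd ha; rewrite !big_nat_recr //=.
set s0 := \sum_(0 <= i < p) c i; set t0 := \sum_(0 <= i < p) c i * n i.
move=> hd ha.
have hst : s0 + t0 <= s0 * n p.
  rewrite /s0 /t0 -big_split big_distrl /=; apply: leq_sum_nat => i.
  move=> /andP [_ hi].
  by rewrite -{1}[c i]muln1 -mulnDr leq_mul2l add1n n_ltN ?orbT.
exists (fun r => if r == p then j - s0 else c r); split.
  rewrite big_nat_recr //= eqxx.
  rewrite (eq_big_nat _ _ (F2 := c)); last first.
    by move=> i /andP [_ hi]; rewrite ltn_eqF.
  rewrite -/s0; nia.
rewrite big_nat_recr //= eqxx.
rewrite (eq_big_nat _ _ (F2 := fun i => c i * n i)); last first.
  by move=> i /andP [_ hi]; rewrite ltn_eqF.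
rewrite -/t0; nia.
Qed.

Lemma sum_ind_eq (m r q : nat) :
  \sum_(0 <= x < m) (x == r) * q = (r < m) * q.
Proof.
elim: m => [|m IH]; first by rewrite big_geq.
rewrite big_nat_recr //= IH.
case: eqP => [->|ne]; first by rewrite ltnn ltnSn.
have -> : (r < m.+1) = (r < m) by apply/idP/idP; lia.
by rewrite addn0.
Qed.

Lemma memA_shift j a' q r : r <= p -> memA j a' -> memA (q + j) (q * n r + a').
Proof.
move=> hr [c [hd ha]].
exists (fun x => c x + (x == r) * q); split.
  by rewrite big_split /= hd sum_ind_eq ltnS hr mul1n addnC.
rewrite (eq_big_nat _ _ (F2 := fun x => c x * n x + (x == r) * (q * n r))); last first.
  by move=> x _; case: eqP => [->|_]; rewrite /=; nia.
by rewrite big_split /= ha sum_ind_eq ltnS hr mul1n addnC.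
Qed.


Definition Rrep x := exists c : nat -> nat,
  (\sum_(0 <= r < p.+1) c r * n r) %% n p = x %% n p.

Lemma Rrep_lin x y u v : Rrep x -> Rrep y -> Rrep (u * x + v * y).
Proof.
move=> [c hc] [c' hc']; exists (fun r => u * c r + v * c' r).
rewrite (eq_big_nat _ _ (F2 := fun r => u * (c r * n r) + v * (c' r * n r))); last first.
  by move=> r _; rewrite mulnDl !mulnA.
rewrite big_split /= -!big_distrr /=.
by rewrite -modnDm -(modnMmr u) hc modnMmr -(modnMmr v) hc' modnMmr modnDm.
Qed.

Lemma Rrep_n r : r <= p -> Rrep (n r).
Proof.
move=> hr; exists (fun x => (x == r) : nat).
rewrite (eq_big_nat _ _ (F2 := fun x => (x == r) * n r)); last first.
  by move=> x _; case: eqP => [->|_].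
by rewrite sum_ind_eq ltnS hr mul1n.
Qed.

Lemma Rrep_gcd x y : Rrep x -> Rrep y -> Rrep (gcdn x y).
Proof.
move=> hx hy; case: (posnP x) => [->|xpos]; first by rewrite gcd0n.
case: (egcdnP y xpos) => km kn hb _.
have Npos := N_pos.
have := Rrep_lin km (kn * (n p).-1) hx hy => [[c hc]]; exists c; rewrite hc.
have -> : km * x + kn * (n p).-1 * y = gcdn x y + (kn * y) * n p.
  have -> : n p = (n p).-1.+1 by rewrite prednK.
  rewrite -pred_Sn; nia.
by rewrite addnC modnMDl.
Qed.

Lemma Rrep_big j : j <= p -> Rrep (\big[gcdn/0]_(1 <= i < j.+1) n i).
Proof.
elim: j => [|j IH] hj.
  rewrite big_geq //; exists (fun _ => 0); rewrite (eq_big_nat _ _ (F2 := fun _ => 0)) //.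
  by rewrite big1.
rewrite big_nat_recr //=; apply: Rrep_gcd; first exact: IH (ltnW hj).
exact: Rrep_n.
Qed.

Hypothesis hgcd : \big[gcdn/0%N]_(1 <= i < p.+1) n i = 1%N.

Lemma Rrep_all y : Rrep y.
Proof.
have h1 : Rrep 1 by rewrite -hgcd; apply: Rrep_big.
have := Rrep_lin y 0 h1 h1; by rewrite muln1 mul0n addn0.
Qed.

Lemma Rbounds Y : exists B L, forall y, y < Y -> exists c : nat -> nat,
  [/\ \sum_(0 <= r < p.+1) c r <= L, \sum_(0 <= r < p.+1) c r * n r <= B &
      (\sum_(0 <= r < p.+1) c r * n r) %% n p = y %% n p].
Proof.
elim: Y => [|Y [B [L IH]]]; first by exists 0, 0.
have [c hc] := Rrep_all Y.
exists (B + \sum_(0 <= r < p.+1) c r * n r), (L + \sum_(0 <= r < p.+1) c r).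
move=> y; rewrite ltnS leq_eqVlt => /orP [/eqP ->|hy].
  by exists c; split => //; rewrite leq_addl.
have [c' [h1 h2 h3]] := IH y hy; exists c'; split => //.
  exact: leq_trans h1 (leq_addr _ _).
exact: leq_trans h2 (leq_addr _ _).
Qed.

Lemma L1 : exists K, forall d a, K <= a -> a + K <= d * n p -> memA d a.
Proof.
have Npos := N_pos.
have [B [L hBL]] := Rbounds (n p).
exists (B + L * n p) => d a hKa hKd.
have [c [hs he hm]] := hBL (a %% n p) (ltn_pmod _ Npos).
set s := \sum_(0 <= r < p.+1) c r in hs *; set e := \sum_(0 <= r < p.+1) c r * n r in he hm *.
rewrite modn_mod in hm.
have hea : e <= a by lia.
have hdiv : n p %| a - e by rewrite -eqn_mod_dvd // hm.
set t := (a - e) %/ n p.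
have ht : t * n p = a - e by rewrite /t divnK.
have hst : s + t <= d.
  have : t * n p <= (d - L) * n p by rewrite ht; nia.
  rewrite leq_pmul2r //; have : L <= d by rewrite -(leq_pmul2r Npos); lia.
  lia.
exists (fun r => c r + (r == p) * t + (r == 0) * (d - s - t)); split.
  rewrite !big_split /= !sum_ind_eq ltnSn ltnS leq0n -/s; lia.
rewrite (eq_big_nat _ _ (F2 := fun r => c r * n r + (r == p) * (t * n p) + (r == 0) * ((d - s - t) * n 0))); last first.
  move=> r _; case: (r =P p) => [->|_]; case: (p =P 0) => [hp0|_]; case: (r =P 0) => [hr0|_] /=; subst; rewrite ?hn0; nia.
rewrite !big_split /= !sum_ind_eq ltnSn ltnS leq0n -/e hn0; lia.
Qed.

End Comb.

Definition pb (P : Prop) : bool := if excluded_middle_informative P then true else false.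
Lemma pbP (P : Prop) : reflect P (pb P).
Proof. by rewrite /pb; case: excluded_middle_informative => h; constructor. Qed.

Lemma exists_step (P : nat -> bool) m : P 0 -> ~~ P m ->
  exists r, r < m /\ P r /\ ~~ P r.+1.
Proof.
elim: m => [-> //|m IH] h0 hm.
case hPm: (P m); first by exists m.
have [r [h1 h2]] := IH h0 (negbT hPm); exists r; split => //; exact: ltnW.
Qed.

Section Count.
Variable n : nat -> nat.
Variable p : nat.
Hypothesis hp : (1 <= p)%N.
Hypothesis hn0 : n 0%N = 0%N.
Hypothesis hinc : forall i, (i < p)%N -> (n i < n i.+1)%N.
Variable K : nat.
Hypothesis hK : forall d a, K <= a -> a + K <= d * n p -> memA n p d a.
Variable q : nat.
Hypothesis hq : 0 < q.

Definition cov d a := exists r, r <= p /\ exists j, d = q + j /\ q * n r <= a /\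
  memA n p j (a - q * n r).

Definition gb d a : bool := pb (memA n p d a /\ ~ cov d a).

Lemma gb_le d a : gb d a -> a <= d * n p.
Proof. move/pbP => [h _]. exact: (memA_le hp hn0 hinc h). Qed.

Lemma gb_small d a : d < q -> K <= a -> a + K <= d * n p -> gb d a.
Proof.
move=> hd h1 h2; apply/pbP; split; first exact: hK.
move=> [r [_ [j [hj _]]]]; lia.
Qed.

Lemma gb_lower j a r : r < p -> q * n r + j * n p < a -> a < q * n r.+1 ->
  K <= a -> a + K <= (q + j) * n p -> gb (q + j) a.
Proof.
move=> hr h1 h2 h3 h4; apply/pbP; split; first exact: hK.
move=> [s [hs [j' [hj [hsa hm]]]]].
have hjj : j' = j by lia.
subst j'.
have := memA_le hp hn0 hinc hm => hle.
case: (leqP s r) => hsr.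
  have := n_mono hp hn0 hinc hsr (ltnW (leq_trans hr (leqnn _))).
  move=> hn; have : q * n s <= q * n r by rewrite leq_mul2l hn orbT.
  lia.
have := n_mono hp hn0 hinc hsr hs => hn.
have : q * n r.+1 <= q * n s by rewrite leq_mul2l hn orbT.
lia.
Qed.

Lemma gb_upper j a : K <= j -> gb (q + j) a ->
  exists r, r < p /\ q * n r + j * n p < a + K /\ a < q * n r.+1 + K.
Proof.
move=> hKj /pbP [hA hcov].
have Npos := N_pos hp hn0 hinc.
have hle := memA_le hp hn0 hinc hA.
have hKa : K <= a.
  rewrite leqNgt; apply/negP => haK; apply: hcov.
  exists 0; split => //; exists j; split => //; rewrite hn0 muln0 subn0; split => //.
  apply: (memA_low hp hn0 hinc hA); lia.
have hKd : a + K <= (q + j) * n p.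
  rewrite leqNgt; apply/negP => hlt; apply: hcov.
  exists p; split => //; exists j; split => //; split.
    nia.
  apply: (memA_high hp hn0 hinc hA); lia.
have hnot : forall r, r <= p -> q * n r + K <= a -> a + K <= q * n r + j * n p -> False.
  move=> r hr h1 h2; apply: hcov; exists r; split => //; exists j; split => //.
  split; first lia.
  apply: hK; lia.
have hP0 : q * n 0 + K <= a by rewrite hn0 muln0.
have hPp : ~~ (q * n p + K <= a) by apply/negP => h; apply: (hnot p) => //; lia.
have [r [hr [h1 h2]]] := @exists_step (fun r => q * n r + K <= a) p hP0 hPp.
exists r; split => //; split; last by lia.
rewrite ltnNge; apply/negP => h; exact: (hnot r (ltnW hr) h1 h).
Qed.

Definition U M d := \sum_(0 <= a < M) gb d a.

Lemma U_le_small M d : U M d <= d * n p + 1.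
Proof.
apply: leq_trans (_ : \sum_(0 <= a < M) ((0 <= a) && (a < (d * n p).+1)) <= _).
  apply: leq_sum_nat => a _; case h: (gb d a) => //=; have := gb_le h; lia.
rewrite sum_interval; lia.
Qed.

Lemma U_ge_small M d : d < q -> d * n p < M -> d * n p + 1 <= U M d + 2 * K.
Proof.
move=> hd hM.
have : \sum_(0 <= a < M) ((K <= a) && (a < (d * n p).+1 - K)) <= U M d.
  apply: leq_sum_nat => a _; case h: ((K <= a) && _) => //=.
  by rewrite gb_small //; lia.
rewrite sum_interval; lia.
Qed.

Lemma U_le_large M j : K <= j ->
  U M (q + j) <= \sum_(0 <= r < p) ((q * (n r.+1 - n r) + 2 * K) - j * n p).
Proof.
move=> hKj.
pose G r a := (q * n r + j * n p + 1 - K <= a) && (a < q * n r.+1 + K).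
apply: leq_trans (_ : \sum_(0 <= a < M) \sum_(0 <= r < p) G r a <= _).
  apply: leq_sum_nat => a _; case h: (gb _ a) => //.
  have [r [hr [h1 h2]]] := gb_upper hKj h.
  apply: leq_trans (term_le_sum (fun r => (G r a : nat)) hr).
  by have -> : G r a = true by apply/andP; split; lia.
rewrite exchange_big_nat; apply: leq_sum_nat => r /andP [_ hr].
rewrite sum_interval.
have := n_mono hp hn0 hinc (leqnSn r) hr => hn.
have : q * (n r.+1 - n r) = q * n r.+1 - q * n r by rewrite mulnBr.
have : q * n r <= q * n r.+1 by rewrite leq_mul2l hn orbT.
lia.
Qed.

Lemma U_ge_large M j : (q + j) * n p < M ->
  \sum_(0 <= r < p) (q * n r.+1 - (q * n r + j * n p + 1)) <= U M (q + j) + p * (2 * K).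
Proof.
move=> hM.
pose G r a := [&& (q * n r + j * n p + 1 <= a), (a < q * n r.+1), (K <= a) & (a + K <= (q + j) * n p)].
apply: leq_trans (_ : \sum_(0 <= r < p) (\sum_(0 <= a < M) G r a + 2 * K) <= _).
  apply: leq_sum_nat => r /andP [_ hr].
  have hn : n r.+1 <= n p by apply: (n_mono hp hn0 hinc) => //.
  have hqn : q * n r.+1 <= (q + j) * n p.
    apply: leq_trans (_ : q * n p <= _); first by rewrite leq_mul2l hn orbT.
    by rewrite leq_mul2r leq_addr orbT.
  have h1 : q * n r.+1 - (q * n r + j * n p + 1) =
      \sum_(0 <= a < M) ((q * n r + j * n p + 1 <= a) && (a < q * n r.+1)).
    by rewrite sum_interval; congr (_ - _); apply/esym/minn_idPl; lia.
  rewrite h1.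
  apply: leq_trans (_ : \sum_(0 <= a < M) (G r a + ((0 <= a) && (a < K)) +
      (((q + j) * n p).+1 - K <= a) && (a < ((q + j) * n p).+1)) <= _).
    apply: leq_sum_nat => a _; rewrite /G.
    case: (leqP (q * n r + j * n p + 1) a) => ?; case: (ltnP a (q * n r.+1)) => ? //=.
    case: (leqP K a) => ?; case: (leqP (a + K) ((q + j) * n p)) => ? //=;
    case: (ltnP a K) => ? //=; case: (leqP (((q + j) * n p).+1 - K) a) => ?;
    case: (ltnP a ((q + j) * n p).+1) => ? //=; lia.
  have hs : \sum_(0 <= i < M) (i < K) = minn K M by rewrite -(subn0 (minn K M)) -sum_interval.
  rewrite !big_split /= !sum_interval hs; lia.
rewrite big_split /= sum_nat_const_nat subn0 leq_add2r.
rewrite exchange_big_nat; apply: leq_sum_nat => a _.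
apply: sum_le1_mono.
  move=> r s hrs hs /and4P [_ h1 _ _] /and4P [h2 _ _ _].
  have := n_mono hp hn0 hinc hrs (ltnW hs) => hn.
  have : q * n r.+1 <= q * n s by rewrite leq_mul2l hn orbT.
  lia.
move=> r hr /and4P [h1 h2 h3 h4]; apply: (gb_lower hr) => //; lia.
Qed.

Lemma good_lt d a : memA n p d a -> ~ cov d a -> d < q + (q + 2 * K + 1).
Proof.
move=> hA hc; rewrite ltnNge; apply/negP => hd.
have Npos := N_pos hp hn0 hinc.
have hgb : gb (q + (d - q)) a by rewrite subnKC; [apply/pbP | lia].
have hKj : K <= d - q by lia.
have [r [hr [h1 h2]]] := gb_upper hKj hgb.
have hn : n r.+1 <= n p by apply: (n_mono hp hn0 hinc).
have : q * n r.+1 <= q * n p by rewrite leq_mul2l hn orbT.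
have : (q + 2 * K + 1) * n p <= (d - q) * n p by rewrite leq_mul2r; apply/orP; right; lia.
nia.
Qed.


Definition Dq := q + (q + 2 * K + 1).
Definition Mq := Dq * n p + 1.
Definition lenq := \sum_(0 <= d < Dq) U Mq d.
Definition SD := \sum_(0 <= r < p) (n r.+1 - n r) * (n r.+1 - n r).

Lemma len_split : lenq = \sum_(0 <= d < q) U Mq d + \sum_(0 <= j < q + 2 * K + 1) U Mq (q + j).
Proof.
rewrite /lenq /Dq (@big_cat_nat _ _ _ q 0) ?leq_addr //=; congr (_ + _).
rewrite -{1}(add0n q) big_addn addKn.
by apply: eq_big_nat => j _; rewrite addnC.
Qed.

Lemma Delta_le r : r < p -> n r.+1 - n r <= n p.
Proof. move=> hr; have := n_mono hp hn0 hinc hr (leqnn p); lia. Qed.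

Lemma len_upper :
  2 * n p * lenq <= (n p * n p + SD) * (q * q) +
    (2 * n p + 2 * n p * n p * K + 2 * n p * K * (K * n p + 1) +
     p * (8 * K * n p + 4 * K * K + 2 * n p * n p)) * q.
Proof.
have Npos := N_pos hp hn0 hinc.
set N := n p.
set c0 := 8 * K * N + 4 * K * K + 2 * N * N.
set T := q + 2 * K + 1.
set c := (q + K) * N + 1.
rewrite len_split -/T.
have hA : \sum_(0 <= d < q) U Mq d <= \sum_(0 <= d < q) (d * N + 1).
  by apply: leq_sum_nat => d _; apply: U_le_small.
have hS1 := sumlin N q.
have hB : \sum_(0 <= j < T) U Mq (q + j) <=
    \sum_(0 <= j < T) (((0 <= j) && (j < K)) * c +
      \sum_(0 <= r < p) ((q * (n r.+1 - n r) + 2 * K) - j * N)).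
  apply: leq_sum_nat => j _.
  case: (ltnP j K) => hj /=.
    rewrite mul1n; apply: leq_trans (leq_addr _ _).
    apply: leq_trans (U_le_small _ _) _; rewrite /c; nia.
  by rewrite mul0n add0n; apply: U_le_large.
have hs : \sum_(0 <= j < T) (j < K) = minn K T by rewrite -(subn0 (minn K T)) -sum_interval.
rewrite big_split /= -big_distrl /= hs [X in _ <= _ + X]exchange_big_nat /= in hB.
have hmin : minn K T <= K by rewrite geq_minl.
have hC : 2 * N * \sum_(0 <= r < p) \sum_(0 <= j < T) ((q * (n r.+1 - n r) + 2 * K) - j * N)
    <= q * q * SD + p * (q * c0).
  rewrite big_distrr /= /SD big_distrr /=.
  have -> : p * (q * c0) = \sum_(0 <= i < p) (q * c0) by rewrite sum_nat_const_nat subn0.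
  rewrite -big_split /=.
  apply: leq_sum_nat => r /andP [_ hr].
  have := Ssum_upper (q * (n r.+1 - n r) + 2 * K) T Npos; rewrite /Ssum => h.
  apply: leq_trans h _.
  have := Delta_le hr; rewrite -/N => hD.
  move: (n r.+1 - n r) hD => D hD.
  have hx : q * D <= q * N by rewrite leq_mul2l hD orbT.
  have -> : q * q * (D * D) = (q * D) * (q * D) by rewrite mulnACA.
  move: (q * D) hx => x hx.
  have h1 : K * x <= K * (q * N) by rewrite leq_mul2l hx orbT.
  have h2 : N * x <= N * (q * N) by rewrite leq_mul2l hx orbT.
  have h3 : K * K <= K * K * q by rewrite leq_pmulr.
  have h4 : N * K <= N * K * q by rewrite leq_pmulr.
  rewrite /c0; lia.
have h1 : 2 * N * \sum_(0 <= d < q) U Mq d <= 2 * N * \sum_(0 <= d < q) (d * N + 1)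
  by rewrite leq_mul2l hA orbT.
have h1' : N * (2 * \sum_(0 <= d < q) (d * N + 1)) + N * (q * N) = N * (q * q * N) + N * (2 * q)
  by rewrite -!mulnDr hS1.
have h2 : 2 * N * \sum_(0 <= j < T) U Mq (q + j) <= 2 * N * (K * c) +
    2 * N * \sum_(0 <= r < p) \sum_(0 <= j < T) (q * (n r.+1 - n r) + 2 * K - j * N).
  rewrite -mulnDr leq_mul2l; apply/orP; right; apply: leq_trans hB _.
  by rewrite leq_add2r leq_mul2r hmin orbT.
have h3 : 2 * N * K * (K * N + 1) <= 2 * N * K * (K * N + 1) * q by rewrite leq_pmulr.
rewrite /c in h2; move: h1 h1' h2 h3 hC; move: (\sum_(0 <= r < p) _) => SS.
move: (\sum_(0 <= d < q) (d * N + 1)) => S1'; move: (\sum_(0 <= d < q) U Mq d) => A.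
move: (\sum_(0 <= j < T) U Mq (q + j)) => B.
move=> h1 h1' h2 h3 hC; rewrite mulnDr; lia.
Qed.

Lemma len_lower :
  (n p * n p + SD) * (q * q) <= 2 * n p * lenq +
    (4 * n p * K + n p * n p + 4 * n p * p * K + 2 * p * n p) * q.
Proof.
have Npos := N_pos hp hn0 hinc.
set N := n p.
set T := q + 2 * K + 1.
rewrite len_split -/T.
have hA : \sum_(0 <= d < q) (d * N + 1) <= \sum_(0 <= d < q) U Mq d + q * (2 * K).
  have -> : q * (2 * K) = \sum_(0 <= i < q) (2 * K) by rewrite sum_nat_const_nat subn0.
  rewrite -big_split /=.
  apply: leq_sum_nat => d /andP [_ hd]; apply: U_ge_small => //.
  rewrite /Mq /Dq.
  have h' : d * N <= (q + (q + 2 * K + 1)) * N by rewrite leq_mul2r; apply/orP; right; lia.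
  lia.
have hS1 := sumlin N q.
have hB : \sum_(0 <= j < q) \sum_(0 <= r < p) (q * n r.+1 - (q * n r + j * N + 1))
    <= \sum_(0 <= j < T) U Mq (q + j) + q * (p * (2 * K)).
  apply: leq_trans (_ : \sum_(0 <= j < q) (U Mq (q + j) + p * (2 * K)) <= _).
    apply: leq_sum_nat => j /andP [_ hj]; apply: U_ge_large.
    rewrite /Mq /Dq.
    have h' : (q + j) * N <= (q + (q + 2 * K + 1)) * N by rewrite leq_mul2r; apply/orP; right; lia.
    lia.
  rewrite big_split /= sum_nat_const_nat subn0 leq_add2r.
  by apply: sum_prefix_le; rewrite /T; lia.
have hC : q * q * SD <= 2 * N * \sum_(0 <= j < q) \sum_(0 <= r < p) (q * n r.+1 - (q * n r + j * N + 1))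
    + p * (2 * q * N).
  rewrite exchange_big_nat /= big_distrr /= /SD big_distrr /=.
  have -> : p * (2 * q * N) = \sum_(0 <= i < p) (2 * q * N) by rewrite sum_nat_const_nat subn0.
  rewrite -big_split /=.
  apply: leq_sum_nat => r /andP [_ hr].
  have hn := n_mono hp hn0 hinc (leqnSn r) hr.
  have hD := Delta_le hr; rewrite -/N in hD.
  have -> : \sum_(0 <= j < q) (q * n r.+1 - (q * n r + j * N + 1)) =
      Ssum N (q * (n r.+1 - n r) - 1) q.
    apply: eq_big_nat => j _.
    have : q * (n r.+1 - n r) = q * n r.+1 - q * n r by rewrite mulnBr.
    have : q * n r <= q * n r.+1 by rewrite leq_mul2l hn orbT.
    lia.
  have hx : q * (n r.+1 - n r) - 1 <= q * N.
    have : q * (n r.+1 - n r) <= q * N by rewrite leq_mul2l hD orbT.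
    lia.
  have := Ssum_lower Npos hx.
  have : q * (n r.+1 - n r) <= q * N by rewrite leq_mul2l hD orbT.
  move: (Ssum N _ q) => S.
  rewrite mulnACA.
  move: (q * (n r.+1 - n r)) => x hxN hS.
  case: x hxN hS => [|y] hxN hS; first by rewrite muln0.
  rewrite subn1 /= in hS.
  have -> : y.+1 * y.+1 = y * y + 2 * y + 1 by rewrite mulSn mulnS; lia.
  lia.
have h1 : N * (2 * \sum_(0 <= d < q) (d * N + 1)) + N * (q * N) = N * (q * q * N) + N * (2 * q)
  by rewrite -!mulnDr hS1.
have h2 : 2 * N * \sum_(0 <= d < q) (d * N + 1) <= 2 * N * (\sum_(0 <= d < q) U Mq d + q * (2 * K))
  by rewrite leq_mul2l hA orbT.
have h3 : 2 * N * \sum_(0 <= j < q) \sum_(0 <= r < p) (q * n r.+1 - (q * n r + j * N + 1)) <=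
    2 * N * (\sum_(0 <= j < T) U Mq (q + j) + q * (p * (2 * K)))
  by rewrite leq_mul2l hB orbT.
move: h1 h2 h3 hC; move: (\sum_(0 <= j < q) \sum_(0 <= r < p) _) => SS.
move: (\sum_(0 <= d < q) (d * N + 1)) => S1'; move: (\sum_(0 <= d < q) U Mq d) => A.
move: (\sum_(0 <= j < T) U Mq (q + j)) => B.
move=> h1 h2 h3 hC; rewrite !mulnDr in h2 h3 *; lia.
Qed.

End Count.

Definition i1 : 'I_2 := lift ord0 ord0.

Lemma mon2E0 a b : mon2 a b ord0 = a.
Proof. by rewrite /mon2 mnmE. Qed.

Lemma mon2E1 a b : mon2 a b i1 = b.
Proof. by rewrite /mon2 mnmE. Qed.

Lemma ord2_cases (i : 'I_2) : i = ord0 \/ i = i1.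
Proof. by case: i => [[|[|j]]] hi //=; [left|right]; apply/val_inj. Qed.

Lemma mon2_eta (m : 'X_{1..2}) : m = mon2 (m ord0) (m i1).
Proof.
apply/mnmP => i; case: (ord2_cases i) => ->; by rewrite ?mon2E0 ?mon2E1.
Qed.

Lemma mon2_inj a b a' b' : mon2 a b = mon2 a' b' -> a = a' /\ b = b'.
Proof.
move=> h; split; first by rewrite -(mon2E0 a b) h mon2E0.
by rewrite -(mon2E1 a b) h mon2E1.
Qed.

Section Alg.
Variable n : nat -> nat.
Variable p : nat.
Hypothesis hp : (1 <= p)%N.
Hypothesis hn0 : n 0%N = 0%N.
Hypothesis hinc : forall i, (i < p)%N -> (n i < n i.+1)%N.
Variable K : nat.
Hypothesis hK : forall d a, K <= a -> a + K <= d * n p -> memA n p d a.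
Variable q : nat.
Hypothesis hq : 0 < q.

Lemma sum_split_N (c : nat -> nat) :
  \sum_(0 <= r < p.+1) c r * n r + \sum_(0 <= r < p.+1) c r * (n p - n r)
  = (\sum_(0 <= r < p.+1) c r) * n p.
Proof.
rewrite -big_split big_distrl /=; apply: eq_big_nat => r /andP [_ hr].
have := n_leN hp hn0 hinc (_ : r <= p) => h; rewrite -mulnDr subnKC //; exact: h.
Qed.

Lemma inS_memA a b : inS n p a b <-> exists d, memA n p d a /\ a + b = d * n p.
Proof.
split.
  move=> [c [ha hb]].
  rewrite -(big_mkord (fun _ => true) (fun r => c r * n r)) in ha.
  rewrite -(big_mkord (fun _ => true) (fun r => c r * (n p - n r))) in hb.
  exists (\sum_(0 <= r < p.+1) c r); split; first by exists c.
  by rewrite ha hb sum_split_N.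
move=> [d [[c [hd ha]] hab]]; exists c.
rewrite -(big_mkord (fun _ => true) (fun r => c r * n r)).
rewrite -(big_mkord (fun _ => true) (fun r => c r * (n p - n r))); split=> //.
have := sum_split_N c; rewrite hd ha; lia.
Qed.

Definition qg r := (mon2 (n r) (n p - n r) *+ q)%MM.

Lemma qgE0 r : qg r ord0 = n r * q.
Proof. by rewrite /qg mulmnE mon2E0. Qed.

Lemma qgE1 r : qg r i1 = (n p - n r) * q.
Proof. by rewrite /qg mulmnE mon2E1. Qed.

Definition covered (m : 'X_{1..2}) := exists r, r <= p /\ (qg r <= m)%MM /\
  inS n p ((m - qg r)%MM ord0) ((m - qg r)%MM i1).

Definition mx (x : 'I_(Dq K q) * 'I_(Mq n p K q)) : 'X_{1..2} :=
  mon2 x.2 (x.1 * n p - x.2).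

Definition Bset := [set x : 'I_(Dq K q) * 'I_(Mq n p K q) | gb n p q x.1 x.2].

Lemma lepm2 (m m' : 'X_{1..2}) : (m <= m')%MM = (m ord0 <= m' ord0) && (m i1 <= m' i1).
Proof.
apply/mnm_lepP/andP => [h|[h0 h1] i]; first by split; apply: h.
by case: (ord2_cases i) => ->.
Qed.

Lemma B_inS x : x \in Bset -> inS n p (mx x ord0) (mx x i1).
Proof.
case: x => x1 x2; rewrite inE /= => /pbP [hA _]; apply/inS_memA; exists x1; split.
  by rewrite /mx /= mon2E0.
rewrite /mx /= mon2E0 mon2E1; have := memA_le hp hn0 hinc hA; lia.
Qed.

Lemma B_notcov x : x \in Bset -> ~ covered (mx x).
Proof.
case: x => x1 x2; rewrite inE /= => /pbP [hA hc] [r [hr [hle hS]]]; apply: hc.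
have Npos := N_pos hp hn0 hinc.
move: hle hS; rewrite lepm2 !mnmBE /mx /= !mon2E0 !mon2E1 qgE0 qgE1 => /andP [h0 h1].
move=> /inS_memA [j [hj hsum]].
exists r; split => //; exists j; split; last by split; [lia | rewrite mulnC].
have hle := memA_le hp hn0 hinc hA.
have hr' := n_leN hp hn0 hinc hr.
have : x1 * n p = (q + j) * n p.
  have : (n p - n r) * q = n p * q - n r * q by rewrite mulnBl.
  have : n r * q <= n p * q by rewrite leq_mul2r hr' orbT.
  rewrite mulnDl; lia.
move/eqP; rewrite eqn_pmul2r // => /eqP; lia.
Qed.

Lemma S_split (m : 'X_{1..2}) : inS n p (m ord0) (m i1) ->
  covered m \/ exists2 x, x \in Bset & mx x = m.
Proof.
move=> /inS_memA [d [hA hab]].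
have Npos := N_pos hp hn0 hinc.
case: (pbP (cov n p q d (m ord0))) => hc.
  left; move: hc => [r [hr [j [hdj [hqa hj]]]]].
  exists r; split => //.
  have hle := memA_le hp hn0 hinc hj.
  have hr' := n_leN hp hn0 hinc hr.
  have e1 : (n p - n r) * q = n p * q - n r * q by rewrite mulnBl.
  have e2 : n r * q <= n p * q by rewrite leq_mul2r hr' orbT.
  move: hab; rewrite hdj mulnDl => hab.
  split.
    rewrite lepm2 qgE0 qgE1; apply/andP; split; first by rewrite mulnC.
    lia.
  rewrite !mnmBE qgE0 qgE1; apply/inS_memA; exists j; split.
    by rewrite mulnC.
  lia.
right.
have hgb : gb n p q d (m ord0) by apply/pbP.
have hd := good_lt hp hn0 hinc hK hq hA hc.
have hle := memA_le hp hn0 hinc hA.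
have hd' : d < Dq K q by [].
have ha' : m ord0 < Mq n p K q.
  rewrite /Mq; have : d * n p <= Dq K q * n p by rewrite leq_mul2r ltnW ?orbT.
  lia.
exists (Ordinal hd', Ordinal ha'); first by rewrite inE.
rewrite [RHS]mon2_eta /mx /=; congr mon2; lia.
Qed.

Lemma mx_inj : {in Bset &, injective mx}.
Proof.
move=> [x1 x2] [y1 y2] hx hy; rewrite /mx /= => /mon2_inj [h1 h2].
move: hx hy; rewrite !inE /= => /pbP [hx _] /pbP [hy _].
have hlx := memA_le hp hn0 hinc hx; have hly := memA_le hp hn0 hinc hy.
have Npos := N_pos hp hn0 hinc.
have : x1 * n p = y1 * n p by lia.
move/eqP; rewrite eqn_pmul2r // => /eqP e.
by congr pair; apply/val_inj.
Qed.

End Alg.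

Section Lin.
Local Open Scope ring_scope.
Variable k : fieldType.
Variable n : nat -> nat.
Variable p : nat.
Hypothesis hp : (1 <= p)%N.
Hypothesis hn0 : n 0%N = 0%N.
Hypothesis hinc : forall i, (i < p)%N -> (n i < n i.+1)%N.
Variable K : nat.
Hypothesis hK : forall d a, (K <= a)%N -> (a + K <= d * n p)%N -> memA n p d a.
Variable q : nat.
Hypothesis hq : (0 < q)%N.

Lemma genSq r : genS k n p r ^+ q = 'X_[qg n p q r].
Proof. by rewrite /genS mpolyXn. Qed.

Lemma covered_of_supp (c : {mpoly k[2]}) r (m : 'X_{1..2}) :
  (r <= p)%N -> in_kS n p c -> m \in msupp (c * 'X_[qg n p q r]) -> covered n p q m.
Proof.
move=> hr hc hm.
have := perm_mem (msuppMX c (qg n p q r)) m; rewrite hm => /esym /mapP [m' hm' ->].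
exists r; split => //; split; first exact: lem_addr.
by rewrite addmC addmK; apply: hc.
Qed.

Lemma in_kS_X (m : 'X_{1..2}) : inS n p (m ord0) (m i1) -> in_kS n p ('X_[m] : {mpoly k[2]}).
Proof. by move=> h m'; rewrite msuppX mem_seq1 => /eqP ->. Qed.

Lemma in_kS_sum (I : eqType) (r : seq I) (F : I -> {mpoly k[2]}) :
  (forall i, in_kS n p (F i)) -> in_kS n p (\sum_(i <- r) F i).
Proof.
move=> h m /msupp_sum_le /flattenP [s /mapP [i _ ->] hm]; exact: h hm.
Qed.

Lemma in_kS_scale (c : k) f : in_kS n p f -> in_kS n p (c *: f).
Proof. by move=> h m /msuppZ_le; apply: h. Qed.

Definition mB (i : 'I_#|Bset n p K q|) := mx (enum_val i).

Lemma mB_inj : injective mB.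
Proof.
move=> i j; rewrite /mB => /(mx_inj hp hn0 hinc hq (enum_valP i) (enum_valP j)).
exact: enum_val_inj.
Qed.

Lemma indep_part : indep_mod n p q (fun i => ('X_[mB i] : {mpoly k[2]})).
Proof.
split.
  move=> i; apply: in_kS_X; rewrite /mB; exact: (B_inS hp hn0 hinc hq (enum_valP i)).
move=> a [c [hc heq]] i.
have := congr1 (mcoeff (mB i)) heq.
rewrite !raddf_sum /=.
rewrite (bigD1 i) //= mcoeffZ mcoeffX eqxx mulr1 big1 ?addr0; last first.
  move=> j hj; rewrite mcoeffZ mcoeffX.
  by case: eqP => [/mB_inj e|]; [move: hj; rewrite e eqxx | rewrite mulr0].
move=> ->; apply: big1 => r _.
rewrite genSq; apply/eqP; rewrite mcoeff_eq0; apply/negP => hm.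
apply: (B_notcov hp hn0 hinc hq (enum_valP i)).
exact: covered_of_supp (ltn_ord r) (hc r) hm.
Qed.


Lemma in_kS_termX (c : k) (m : 'X_{1..2}) :
  (c = 0 \/ inS n p (m ord0) (m i1)) -> in_kS n p (c *: ('X_[m] : {mpoly k[2]})).
Proof.
case=> [->|h]; last by apply: in_kS_scale; apply: in_kS_X.
by rewrite scale0r => m'; rewrite msupp0.
Qed.

Lemma dep_part (f : 'I_(#|Bset n p K q|).+1 -> {mpoly k[2]}) : ~ indep_mod n p q f.
Proof.
move=> [hf hind].
set L := #|Bset n p K q| in f hf hind *.
pose Mx := \matrix_(i < L.+1, j < L) (f i)@_(mB j).
have hker : kermx Mx != 0.
  rewrite -mxrank_eq0 mxrank_ker; have := rank_leq_col Mx; rewrite subn_eq0 -ltnNge.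
  by move=> h; apply: leq_ltn_trans h _.
have [i0 [j0 hij]] : exists i0 j0, kermx Mx i0 j0 != 0.
  case: (boolP [exists i0, exists j0, kermx Mx i0 j0 != 0]).
    by move=> /existsP [i0 /existsP [j0 h]]; exists i0, j0.
  move=> hn; exfalso; move/negP: hker; apply; apply/eqP/matrixP => i j.
  rewrite [RHS]mxE; apply/eqP; move: hn; apply: contraNT => h.
  by apply/existsP; exists i; apply/existsP; exists j.
pose a i := kermx Mx i0 i.
have hrow : forall j : 'I_L, \sum_i a i * (f i)@_(mB j) = 0.
  move=> j; have := congr1 (fun A : 'M[k]_(L.+1, L) => A i0 j) (mulmx_ker Mx); rewrite !mxE /= => h.
  by apply: etrans _ h; apply: eq_bigr => i _; rewrite /Mx [X in _ = _ * X]mxE.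
pose g := \sum_i a i *: f i.
have hg : forall m, g@_m = \sum_i a i * (f i)@_m.
  by move=> m; rewrite /g raddf_sum; apply: eq_bigr => i _; exact: mcoeffZ.
have hcov : forall m, m \in msupp g -> covered n p q m.
  move=> m hm.
  have hS : inS n p (m ord0) (m i1).
    case: (classic (inS n p (m ord0) (m i1))) => // hn; exfalso.
    have : g@_m = 0.
      rewrite hg big1 // => i _; rewrite memN_msupp_eq0 ?mulr0 //.
      by apply/negP => /hf.
    by move: hm; rewrite mcoeff_msupp => /eqP.
  case: (S_split hp hn0 hinc hK hq hS) => // [[x hx hxm]].
  exfalso; move: hm; rewrite mcoeff_msupp hg.
  have hxj : x = enum_val (enum_rank_in hx x) by rewrite enum_rankK_in.
  by rewrite -hxm hxj -/(mB _) hrow eqxx.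
pose P m r := [/\ (r <= p)%N, (qg n p q r <= m)%MM &
  inS n p ((m - qg n p q r)%MM ord0) ((m - qg n p q r)%MM i1)].
pose rsel m := epsilon (inhabits 0%N) (P m).
have hrsel : forall m, m \in msupp g -> P m (rsel m).
  move=> m hm; apply: epsilon_spec.
  by have [r [h1 [h2 h3]]] := hcov m hm; exists r; split.
pose c (r : nat) := \sum_(m <- msupp g)
  (((rsel m == r)%:R * g@_m) *: ('X_[m - qg n p q r] : {mpoly k[2]})).
have hin : in_frob_ideal n p q g.
  exists c; split.
    move=> r; apply: in_kS_sum => m; apply: in_kS_termX.
    case: (boolP (m \in msupp g)) => hm; last first.
      by left; rewrite memN_msupp_eq0 // mulr0.
    case: (rsel m =P r) => [<-|_]; last by left; rewrite mulr0n mul0r.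
    by right; have [_ _ h] := hrsel m hm.
  have -> : \sum_(r < p.+1) c r * genS k n p r ^+ q =
      \sum_(r < p.+1) \sum_(m <- msupp g) (((rsel m == r)%:R * g@_m) *: ('X_[m] : {mpoly k[2]})).
    apply: eq_bigr => r _; rewrite genSq /c big_distrl /=; apply: eq_big_seq => m hm.
    rewrite -scalerAl -mpolyXD.
    case: (rsel m =P r) => [e|_]; last by rewrite mulr0n mul0r !scale0r.
    have [_ h2 _] := hrsel m hm; rewrite -e submK //.
  rewrite exchange_big /= [LHS]mpolyE; apply: eq_big_seq => m hm.
  rewrite -scaler_suml -mulr_suml.
  have [h1 _ _] := hrsel m hm.
  have hr : (rsel m < p.+1)%N by [].
  rewrite (bigD1 (Ordinal hr)) //= eqxx mulr1n big1 ?addr0 ?mul1r //.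
  move=> r hr'; case: (rsel m =P r) => [e|_]; last by rewrite mulr0n.
  by exfalso; move/eqP: hr'; apply; apply/val_inj; rewrite /= e.
have := hind a; rewrite -/g => /(_ hin j0) => h.
by move: hij; rewrite -/(a j0) h eqxx.
Qed.

Lemma quot_dim_B : quot_dim k n p q #|Bset n p K q|.
Proof.
split; first by exists (fun i => 'X_[mB i]); apply: indep_part.
exact: dep_part.
Qed.

End Lin.

Lemma card_B n p K q : #|Bset n p K q| = lenq n p K q.
Proof.
rewrite -sum1_card big_mkcond /=.
rewrite (eq_bigr (fun x : 'I_(Dq K q) * 'I_(Mq n p K q) => (gb n p q x.1 x.2 : nat))); last first.
  by move=> x _; rewrite inE; case: gb.
rewrite -(pair_big xpredT xpredT (fun (i : 'I_(Dq K q)) (j : 'I_(Mq n p K q)) => (gb n p q i j : nat))) /=.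
rewrite /lenq /U [RHS]big_mkord; apply: eq_bigr => i _.
by rewrite big_mkord.
Qed.

Local Open Scope ring_scope.

Lemma sum_ident (x : nat -> rat) t : x 0%N = 0 ->
  2 * (\sum_(0 <= r < t) (x r.+1 - 1) * (x r.+1 - x r)) =
  x t ^+ 2 + \sum_(0 <= r < t) (x r.+1 - x r) ^+ 2 - 2 * x t.
Proof.
move=> h0; elim: t => [|t IH]; first by rewrite !big_geq // h0; ring.
rewrite !big_nat_recr //= mulrDr IH; ring.
Qed.

Local Open Scope ring_scope.

Lemma rat_est (L E C W m : nat) (eps : rat) : (0 < W)%N -> (0 < m)%N ->
  (W * L <= E * (m * m) + C * m)%N -> (E * (m * m) <= W * L + C * m)%N ->
  C%:R < eps * m%:R ->
  `|L%:R / (m ^ 2)%:R - E%:R / W%:R| < eps.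
Proof.
move=> hW hm h1 h2 hC.
have hs : 0 < (m%:R : rat) by rewrite ltr0n.
have hw : 1 <= (W%:R : rat) by rewrite ler1n.
have h1' : (W%:R * L%:R <= E%:R * (m%:R * m%:R) + C%:R * m%:R :> rat).
  by rewrite -!natrM -natrD ler_nat.
have h2' : (E%:R * (m%:R * m%:R) <= W%:R * L%:R + C%:R * m%:R :> rat).
  by rewrite -!natrM -natrD ler_nat.
have hc0 : 0 <= (C%:R : rat) by rewrite ler0n.
rewrite natrX.
move: h1' h2' hs hw hC hc0; move: (L%:R : rat) (m%:R : rat) (W%:R : rat) (E%:R : rat) (C%:R : rat).
move=> a s w e c h1' h2' hs hw hC hc0.
have hs0 : s != 0 by rewrite gt_eqF.
have hw0 : w != 0 by apply: lt0r_neq0; lra.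
have -> : a / s ^+ 2 - e / w = (w * a - e * (s * s)) / (w * (s * s)) by field; rewrite hs0 hw0.
have hpos : 0 < w * (s * s) by apply: mulr_gt0; [lra | apply: mulr_gt0].
rewrite normrM normfV (gtr0_norm hpos) ltr_pdivrMr //.
have hn : `|w * a - e * (s * s)| <= c * s by rewrite ler_norml; apply/andP; split; lra.
apply: le_lt_trans hn _.
have hes : 0 < eps * s by apply: le_lt_trans hC.
have hep : 0 < eps by move: hes; rewrite pmulr_lgt0.
have h3 : c * s < eps * s * s by rewrite ltr_pM2r.
have h4 : eps * s * s <= eps * (w * (s * s)).
  rewrite mulrA [eps * w]mulrC -mulrA -[X in X <= _]mul1r -mulrA.
  rewrite ler_pM2r; [lra | by apply: mulr_gt0 => //; apply: mulr_gt0].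
lra.
Qed.

Lemma target_eq (n : nat -> nat) (p : nat) (hp : (1 <= p)%N) (hn0 : n 0%N = 0%N)
    (hinc : forall i, (i < p)%N -> (n i < n i.+1)%N) :
  (1 + (\sum_(1 <= r < p.+1) ((n r)%:R - 1) * ((n r)%:R - (n r.-1)%:R)) / (n p)%:R : rat)
  = ((n p * n p + SD n p)%N)%:R / ((2 * n p)%N)%:R.
Proof.
have Npos := N_pos hp hn0 hinc.
have hN : (n p)%:R != 0 :> rat by rewrite pnatr_eq0 -lt0n.
have hx0 : ((n 0%N)%:R : rat) = 0 by rewrite hn0.
have hS := @sum_ident (fun r => (n r)%:R) p hx0.
have hSD : (SD n p)%:R = \sum_(0 <= r < p) ((n r.+1)%:R - (n r)%:R) ^+ 2 :> rat.
  rewrite /SD natr_sum; apply: eq_big_nat => r /andP [_ hr].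
  by rewrite natrM natrB ?expr2 //; apply: ltnW (hinc _ hr).
rewrite big_add1 /=.
move: hS hSD; set S := \sum_(0 <= r < p) _; set D := \sum_(0 <= r < p) _.
move=> hS hSD.
have -> : S = ((n p)%:R ^+ 2 + D - 2 * (n p)%:R) / 2.
  by rewrite -hS; field.
by rewrite natrD !natrM hSD; field; rewrite hN /=.
Qed.

Lemma eventually_close (len : nat -> nat) (W E C : nat) (Lr : rat) :
  (0 < W)%N -> Lr = E%:R / W%:R ->
  (forall q, (0 < q)%N -> (W * len q <= E * (q * q) + C * q)%N /\
                          (E * (q * q) <= W * len q + C * q)%N) ->
  forall eps : rat, 0 < eps -> exists M : nat, (0 < M)%N /\
    forall m, (M <= m)%N -> `|(len m)%:R / ((m ^ 2)%N)%:R - Lr| < eps.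
Proof.
move=> hW -> hb eps heps.
have h0 : 0 <= C%:R / eps by apply: divr_ge0 => //; apply: ltW.
set M := (Num.Def.archi_bound (C%:R / eps)).+1.
exists M; split => // m hm.
have hm0 : (0 < m)%N by apply: leq_trans hm.
have [b1 b2] := hb m hm0.
apply: (@rat_est (len m) E C W m eps hW hm0 b1 b2).
have := archi_boundP h0; rewrite ltr_pdivrMr // => h.
apply: lt_le_trans h _; rewrite mulrC ler_pM2l //.
by rewrite ler_nat; apply: ltnW.
Qed.

Theorem theorem5p1 (k : fieldType) (p : nat) (n : nat -> nat)
    (hp : (1 <= p)%N)
    (hn0 : n 0%N = 0%N)
    (hinc : forall i, (i < p)%N -> (n i < n i.+1)%N)
    (hgcd : \big[gcdn/0%N]_(1 <= i < p.+1) n i = 1%N) :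
  exists len : nat -> nat,
    (forall q, (0 < q)%N -> quot_dim k n p q (len q)) /\
    HK_limit k len
      (1 + (\sum_(1 <= r < p.+1) ((n r)%:R - 1) * ((n r)%:R - (n r.-1)%:R))
             / (n p)%:R).
Proof.
have [K hK] := L1 hp hn0 hinc hgcd.
exists (fun q => #|Bset n p K q|); split.
  by move=> q hq; apply: quot_dim_B.
have Npos := N_pos hp hn0 hinc.
have hb : forall q, (0 < q)%N ->
    ((2 * n p) * #|Bset n p K q| <= (n p * n p + SD n p) * (q * q) +
       ((2 * n p + 2 * n p * n p * K + 2 * n p * K * (K * n p + 1) +
         p * (8 * K * n p + 4 * K * K + 2 * n p * n p)) +
        (4 * n p * K + n p * n p + 4 * n p * p * K + 2 * p * n p)) * q)%N /\
    ((n p * n p + SD n p) * (q * q) <= (2 * n p) * #|Bset n p K q| +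
       ((2 * n p + 2 * n p * n p * K + 2 * n p * K * (K * n p + 1) +
         p * (8 * K * n p + 4 * K * K + 2 * n p * n p)) +
        (4 * n p * K + n p * n p + 4 * n p * p * K + 2 * p * n p)) * q)%N.
  move=> q hq; rewrite card_B.
  have h1 := len_upper hp hn0 hinc hK hq.
  have h2 := len_lower hp hn0 hinc hK hq.
  split.
    apply: leq_trans h1 _; rewrite leq_add2l leq_mul2r; apply/orP; right; exact: leq_addr.
  apply: leq_trans h2 _; rewrite leq_add2l leq_mul2r; apply/orP; right; exact: leq_addl.
have hW : (0 < 2 * n p)%N by rewrite muln_gt0.
have hcl := eventually_close hW (target_eq hp hn0 hinc) hb.
split.
  move=> q' hq' eps heps.
  have hq'1 : (1 < q')%N by apply: prime_gt1; apply: pcharf_prime hq'.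
  have [M [_ hM]] := hcl eps heps.
  exists M => e he; apply: hM.
  by apply: leq_trans he (ltnW (ltn_expl _ hq'1)).
move=> _ eps heps.
have [M [_ hM]] := hcl eps heps.
by exists M.
Qed.
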